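(* For $i=1,2$ let $\mathbf{L}_i=(L_i,\le)$ be a finite lattice with more than two elements and let $(R_i,\vee,\circ)$ be a subsemiring of $(\mathrm{Res}_1(\mathbf{L}_i),\vee,\circ)$ such that $f_{a,0}\in R_i$ for all $a\in L_i\setminus\{1\}$, every $f\in R_i$ satisfies $f_{a,0}\le f$ for some $a\in L_i\setminus\{1\}$, and for all $a\in L_i\setminus\{0,1\}$, $b\in L_i$ there exists $f\in R_i$ with $f(a)=b$. If $(R_1,\vee,\circ)$ and $(R_2,\vee,\circ)$ are isomorphic semirings, then $\mathbf{L}_1$ and $\mathbf{L}_2$ are isomorphic.
   Context: For a finite lattice $\mathbf{L}$ with least element $0$ and greatest element $1$, $\mathrm{Res}_1(\mathbf{L})$ is the set of maps $f:L\to L$ preserving binary joins with $f(0)=0$ and $f(1)=1$, a semiring under pointwise join $\vee$ and composition $\circ$, ordered pointwise. $f_{a,b}(x)=b$ if $x\le a$ and $1$ otherwise. *)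

(* Defs.v *)
From mathcomp Require Import all_boot all_order.
Set Implicit Arguments. Unset Strict Implicit. Unset Printing Implicit Defensive.
Import Order.TTheory.
Local Open Scope order_scope.

(* A finite lattice with 0 and 1 is modelled as a finTBLatticeType
   (\bot = 0, \top = 1). Maps L -> L are plain functions. *)

Section Res.
Context {d : Order.disp_t} {L : finTBLatticeType d}.

Definition res1 (f : L -> L) : Prop :=
  (forall x y : L, f (x `|` y) = f x `|` f y) /\ f \bot = \bot /\ f \top = \top.

Definition fjoin (f g : L -> L) : L -> L := fun x => f x `|` g x.

Definition fle (f g : L -> L) : Prop := forall x : L, f x <= g x.

Definition fab (a b : L) : L -> L := fun x => if x <= a then b else \top.

Definition subsemiring (R : (L -> L) -> Prop) : Prop :=
  (forall f, R f -> res1 f) /\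
  (forall f g, R f -> R g -> R (fjoin f g)) /\
  (forall f g, R f -> R g -> R (f \o g)).

Definition prop64_hyp (R : (L -> L) -> Prop) : Prop :=
  subsemiring R /\
  (forall a : L, a != \top -> R (fab a \bot)) /\
  (forall f, R f -> exists a : L, a != \top /\ fle (fab a \bot) f) /\
  (forall a b : L, a != \bot -> a != \top -> exists f, R f /\ f a = b).
End Res.

Definition semiring_iso {d1 d2 : Order.disp_t}
  {L1 : finTBLatticeType d1} {L2 : finTBLatticeType d2}
  (R1 : (L1 -> L1) -> Prop) (R2 : (L2 -> L2) -> Prop)
  (phi : (L1 -> L1) -> (L2 -> L2)) : Prop :=
  (forall f, R1 f -> R2 (phi f)) /\
  (forall f g, R1 f -> R1 g -> phi f = phi g -> f = g) /\
  (forall h, R2 h -> exists2 f, R1 f & phi f = h) /\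
  (forall f g, R1 f -> R1 g -> phi (fjoin f g) = fjoin (phi f) (phi g)) /\
  (forall f g, R1 f -> R1 g -> phi (f \o g) = phi f \o phi g).

Definition lattice_iso {d1 d2 : Order.disp_t}
  {L1 : finTBLatticeType d1} {L2 : finTBLatticeType d2} (h : L1 -> L2) : Prop :=
  bijective h /\
  (forall x y, h (x `|` y) = h x `|` h y) /\
  (forall x y, h (x `&` y) = h x `&` h y).

(* Main.v *)
Require Import Defs.
From mathcomp Require Import all_boot all_order.
From Stdlib Require Import FunctionalExtensionality.
Set Implicit Arguments. Unset Strict Implicit. Unset Printing Implicit Defensive.
Import Order.TTheory.

Section Aux.
Local Open Scope order_scope.
Context {d : Order.disp_t} {L : finTBLatticeType d}.

Lemma top_neq_bot : (2 < #|L|)%N -> (\top : L) != \bot.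
Proof.
move=> H; apply/negP => /eqP E.
have : (#|L| <= 1)%N.
  apply/card_le1P => x _ y; rewrite !inE.
  have hy : y = \bot by apply/le_anti; rewrite le0x -E lex1.
  have hx : x = \bot by apply/le_anti; rewrite le0x -E lex1.
  by rewrite hx hy eqxx.
by case: #|L| H => [|[|[|n]]].
Qed.

Lemma res1_mono (f : L -> L) x y : res1 f -> x <= y -> f x <= f y.
Proof.
move=> [hj _] /join_idPr <-. by rewrite hj leUl.
Qed.

Lemma Z_left (a : L) (f : L -> L) : a != \top -> res1 f ->
  f \o fab a \bot = fab a \bot.
Proof.
move=> _ [_ [h0 h1]]; apply: functional_extensionality => x.
by rewrite /= /fab; case: ifP.
Qed.

Lemma fab_join (a a' : L) : (\top : L) != \bot ->
  (fjoin (fab a' \bot) (fab a \bot) = fab a \bot) <-> a <= a'.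
Proof.
move=> tb; split.
  move=> /(congr1 (fun f => f a)); rewrite /fjoin /fab lexx joinx0.
  by case: ifP => // _ E; rewrite E eqxx in tb.
move=> le; apply: functional_extensionality => x; rewrite /fjoin /fab.
case: (boolP (x <= a)) => xa; first by rewrite (le_trans xa le) joinx0.
by rewrite joinx1.
Qed.

Lemma fab_inj (a a' : L) : (\top : L) != \bot ->
  fab a \bot = fab a' \bot -> a = a'.
Proof.
move=> tb E; apply/le_anti/andP; split; apply/(fab_join _ _ tb);
  by rewrite E /fjoin; apply: functional_extensionality => x; rewrite joinxx.
Qed.

Lemma Z_char (R : (L -> L) -> Prop) (g : L -> L) : (2 < #|L|)%N ->
  prop64_hyp R -> R g -> (forall f, R f -> f \o g = g) ->
  exists2 c, c != \top & g = fab c \bot.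
Proof.
move=> cL [[hres _] [_ [_ hex]]] Rg hZ.
have tb := top_neq_bot cL.
have [hj [h0 h1]] := hres g Rg.
have vals : forall x, g x = \bot \/ g x = \top.
  move=> x; case: (eqVneq (g x) \bot) => [->|n0]; first by left.
  case: (eqVneq (g x) \top) => [->|n1]; first by right.
  have [f [Rf fy]] := hex (g x) \bot n0 n1.
  have := congr1 (fun k => k x) (hZ f Rf) => /= E.
  by rewrite fy in E; rewrite -E in n0; rewrite eqxx in n0.
pose c := \join_(x | g x == \bot) x.
have gc : g c = \bot.
  rewrite /c (big_morph g hj h0); apply: big1 => i /eqP //.
have gx : forall x, g x = \bot <-> x <= c.
  move=> x; split => [/eqP hx|hx]; first exact: (@joins_sup _ _ _ x (fun i => g i == \bot) (fun i => i) hx).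
  by apply/eqP; rewrite -lex0 -gc; apply: res1_mono.
exists c.
  apply/negP => /eqP ct; move: (proj2 (gx \top)); rewrite ct lexx h1 => /(_ isT) E.
  by rewrite E eqxx in tb.
apply: functional_extensionality => x; rewrite /fab.
case: ifP => hx; first by apply/gx.
case: (vals x) => // /gx; by rewrite hx.
Qed.

End Aux.

Theorem proposition6p4 (d1 d2 : Order.disp_t)
  (L1 : finTBLatticeType d1) (L2 : finTBLatticeType d2)
  (R1 : (L1 -> L1) -> Prop) (R2 : (L2 -> L2) -> Prop) :
  2 < #|L1| -> 2 < #|L2| ->
  prop64_hyp R1 -> prop64_hyp R2 ->
  (exists phi, semiring_iso R1 R2 phi) ->
  exists h : L1 -> L2, lattice_iso h.
Proof.
move=> c1 c2 H1 H2 [phi [pR [pinj [psurj [pjoin pcomp]]]]].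
have tb1 := top_neq_bot c1; have tb2 := top_neq_bot c2.
have H1' := H1; have H2' := H2.
move: H1' H2' => [[res1 [cj1 cc1]] [fabR1 _]] [[res2 [cj2 cc2]] [fabR2 _]].
have toZ2 : forall a : L1, a != Order.top ->
    exists2 b : L2, b != Order.top & phi (fab a Order.bottom) = fab b Order.bottom.
  move=> a at1; apply: (Z_char c2 H2); first exact/pR/fabR1.
  move=> f Rf; have [f1 Rf1 <-] := psurj f Rf.
  rewrite -pcomp //; last exact: fabR1. congr phi; apply: Z_left => //; exact: res1.
have toZ1 : forall b : L2, b != Order.top ->
    exists2 a : L1, a != Order.top & phi (fab a Order.bottom) = fab b Order.bottom.
  move=> b bt; have [g Rg pg] := psurj _ (fabR2 b bt).
  have [a0 at0 eg] : exists2 a : L1, a != Order.top & g = fab a Order.bottom.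
    apply: (Z_char c1 H1 Rg) => f Rf; apply: pinj => //; first exact: cc1.
    rewrite pcomp // pg; apply: Z_left => //; apply: res2; exact: pR.
  by exists a0 => //; rewrite -pg eg.
pose P a b := (b != Order.top) &&
  [forall x, phi (fab a Order.bottom) x == fab b Order.bottom x].
pose h a := if a == Order.top then Order.top else odflt Order.top [pick b | P a b].
have hspec : forall a, a != Order.top ->
    h a != Order.top /\ phi (fab a Order.bottom) = fab (h a) Order.bottom.
  move=> a at1; rewrite /h (negbTE at1); case: pickP => [b /andP [bt /forallP E]|N].
    by split => //; apply: functional_extensionality => x; apply/eqP.
  have [b bt E] := toZ2 a at1; move: (N b); rewrite /P bt E /=.
  by move/negP; case; apply/forallP => x.
have htop : h Order.top = Order.top by rewrite /h eqxx.
have hle : forall x y, (h x <= h y)%O = (x <= y)%O.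
  move=> x y.
  case: (eqVneq y Order.top) => [->|yt]; first by rewrite htop !lex1.
  have [hyt pys] := hspec y yt.
  case: (eqVneq x Order.top) => [->|xt].
    by rewrite htop !le1x (negbTE yt) (negbTE hyt).
  have [hxt pxs] := hspec x xt.
  apply/idP/idP => le.
    apply/(fab_join _ _ tb1); apply: pinj.
    - by apply: cj1; exact: fabR1.
    - exact: fabR1.
    - by rewrite pjoin; [rewrite pxs pys; apply/fab_join | exact: fabR1 | exact: fabR1].
  apply/(fab_join _ _ tb2); rewrite -pxs -pys -pjoin; [|exact: fabR1|exact: fabR1].
  by congr phi; apply/fab_join.
have hsurj : forall b, exists a, h a = b.
  move=> b; case: (eqVneq b Order.top) => [->|bt]; first by exists Order.top.
  have [a at1 E] := toZ1 b bt; exists a; have [_ E'] := hspec a at1.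
  by apply: (fab_inj tb2); rewrite -E'.
have hinj : injective h.
  by move=> x y E; apply/le_anti; rewrite -!hle E lexx.
exists h; split.
  pose g b := odflt Order.top [pick a | h a == b].
  have hg : cancel g h.
    move=> b; rewrite /g; case: pickP => [a /eqP //|N].
    by have [a E] := hsurj b; move: (N a); rewrite E eqxx.
  exists g => // x; apply: hinj; exact: hg.
split.
  move=> x y; have [z E] := hsurj (h x `|` h y)%O.
  have hxz : (x <= z)%O by rewrite -hle E leUl.
  have hyz : (y <= z)%O by rewrite -hle E leUr.
  by rewrite -E; apply/le_anti; rewrite !hle leUx hxz hyz /= -hle E leUx !hle leUl leUr.
move=> x y; have [z E] := hsurj (h x `&` h y)%O.
have hxz : (z <= x)%O by rewrite -hle E leIl.
have hyz : (z <= y)%O by rewrite -hle E leIr.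
by rewrite -E; apply/le_anti; rewrite !hle lexI hxz hyz andbT -hle E lexI !hle leIl leIr.
Qed.
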